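(* Let $p\ge1$, $\phi_1,\dots,\phi_p:\mathbb Z\to\mathbb C$, $v:\mathbb Z\to\mathbb C$ and integers $t>s$. Then $$\sum_{j=1}^{t-s}H(t,s+j)\,v_{s+j}=\det M,$$ where $M$ is the $(t-s)\times(t-s)$ matrix obtained from $\Phi_{t,s}$ by replacing its first column with $(v_{s+1},v_{s+2},\dots,v_t)^{T}$.
   Context: $\Gamma_t$ is the $p\times p$ companion matrix with first row $(\phi_1(t),\dots,\phi_p(t))$, entries $(i,i-1)$ equal to $1$ for $2\le i\le p$, other entries $0$. For $t>u$ the Green's function $H(t,u)$ is the $(1,1)$ entry of $\Gamma_t\Gamma_{t-1}\cdots\Gamma_{u+1}$, and $H(u,u)=1$. Convention: $\phi_l=0$ for $l>p$. For $t>s$, $\Phi_{t,s}$ is the $(t-s)\times(t-s)$ matrix with $(i,j)$ entry $-1$ if $j=i+1$, $\phi_{i-j+1}(s+i)$ if $1\le j\le i$, $0$ if $j>i+1$. *)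

(* Defs.v *)
From mathcomp Require Import all_boot all_order all_algebra.
Set Implicit Arguments. Unset Strict Implicit. Unset Printing Implicit Defensive.
Import Order.TTheory GRing.Theory Num.Theory.
Local Open Scope ring_scope.

(* Coefficients phi_1..phi_p given as phi : nat -> int -> R; convention
   phi_l = 0 for l > p (and the unused index l = 0 is also set to 0). *)
Definition coefp (R : comNzRingType) (p : nat) (phi : nat -> int -> R)
    (l : nat) (t : int) : R :=
  if (0 < l <= p)%N then phi l t else 0.

(* Companion matrix Gamma_t, of size p (written p.-1.+1; equal to p when p >= 1).
   0-indexed: row 0 is (phi_1(t),...,phi_p(t)); entry (i,i-1) = 1 for i >= 1. *)
Definition Gamma (R : comNzRingType) (p : nat) (phi : nat -> int -> R) (t : int)
    : 'M[R]_(p.-1.+1) :=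
  \matrix_(i, j) (if i == ord0 then coefp p phi j.+1 t
                  else if (i == j.+1 :> nat) then 1 else 0).

(* Green's function: H(t,u) = (1,1) entry of Gamma_t Gamma_{t-1} ... Gamma_{u+1}
   for t > u, and H(u,u) = 1 (empty product).  Value for t < u unused (0). *)
Definition Hgreen (R : comNzRingType) (p : nat) (phi : nat -> int -> R)
    (t u : int) : R :=
  if u <= t then
    (\prod_(k < `|t - u|%N) Gamma p phi (t - k%:Z)) ord0 ord0
  else 0.

(* Phi_{t,s}, an n x n matrix with n = t - s; 1-indexed entry (i,j):
   -1 if j = i+1, phi_{i-j+1}(s+i) if j <= i, 0 otherwise.
   Below i, j are 0-indexed, so the 1-indexed ones are i+1, j+1. *)
Definition PhiMat (R : comNzRingType) (p : nat) (phi : nat -> int -> R)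
    (t s : int) : 'M[R]_(`|t - s|%N) :=
  \matrix_(i, j)
    (if (j == i.+1 :> nat) then -1
     else if (j <= i)%N then coefp p phi (i - j).+1 (s + (i.+1)%:Z)
     else 0).

Definition Mrepl (R : comNzRingType) (p : nat) (phi : nat -> int -> R)
    (v : int -> R) (t s : int) : 'M[R]_(`|t - s|%N) :=
  \matrix_(i, j) (if (j == 0 :> nat) then v (s + (i.+1)%:Z)
                  else PhiMat p phi t s i j).

(* Main.v *)
Require Import Defs.
From mathcomp Require Import all_boot all_order all_algebra zify ring.
Import Order.TTheory GRing.Theory Num.Theory.
Local Open Scope ring_scope.
Set Implicit Arguments.

Lemma key (R : comNzRingType) N (A : 'M[R]_N) (h : nat -> R) (j0 : 'I_N) :
  j0 = 0%N :> nat -> h N.-1 = 1 ->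
  (forall j : 'I_N, (0 < j)%N -> \sum_(i < N) h i * A i j = 0) ->
  (forall i j : 'I_N, (i.+1 < j)%N -> A i j = 0) ->
  (forall i j : 'I_N, j = i.+1 :> nat -> A i j = -1) ->
  \det A = \sum_(i < N) h i * A i j0.
Proof.
case: N A j0 h => [|n] A j0 h; first by case: j0.
move=> j00 hn Hcol Hup Hsup.
have j0E : j0 = ord0 by apply: val_inj.
subst j0.
pose L : 'M[R]_n.+1 := \matrix_(i, k) (if i == ord_max then h k else (i == k)%:R).
have detL : \det L = 1.
  rewrite det_trig; last first.
    apply/forallP => i; apply/forallP => k; apply/implyP => ik.
    rewrite /L mxE; have [ie|ne] := eqVneq i ord_max.
      by move: ik; rewrite ie /= ltnNge -ltnS ltn_ord.
    have [ke|kne] := eqVneq i k; first by move: ik; rewrite ke ltnn.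
    by [].
  rewrite big1 // => i _; rewrite /L mxE; have [->|_] := eqVneq i ord_max; last by rewrite eqxx.
  by rewrite hn.
rewrite -[\det A]mul1r -detL -det_mulmx.
set B := L *m A.
have Bmax : forall j, B ord_max j = \sum_(k < n.+1) h k * A k j.
  by move=> j; rewrite mxE; apply: eq_bigr => k _; rewrite /L mxE eqxx.
have Bo : forall i j, i != ord_max -> B i j = A i j.
  move=> i j /negbTE hi; rewrite mxE (bigD1 i) //= big1 ?addr0.
    by rewrite /L mxE hi eqxx mul1r.
  by move=> k /negbTE ki; rewrite /L mxE hi eq_sym ki mul0r.
rewrite (expand_det_row _ ord_max) (bigD1 ord0) //= big1 ?addr0; last first.
  move=> j j0; rewrite Bmax Hcol ?mul0r //.
  by rewrite lt0n; apply: contra j0 => /eqP e; apply/eqP/val_inj.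
suff -> : cofactor B ord_max ord0 = 1 by rewrite mulr1.
rewrite /cofactor det_trig; last first.
  apply/forallP => i; apply/forallP => k; apply/implyP => ik.
  rewrite 2!mxE Bo; last by rewrite eq_sym neq_lift.
  apply/eqP; apply: Hup; rewrite /= /bump /=.
  by have := ltn_ord i; rewrite ltnNge => /negbTE ->; by rewrite /=.
rewrite (eq_bigr (fun _ : 'I_n.+1.-1 => -1 : R)); last first.
  move=> i _; rewrite 2!mxE Bo; last by rewrite eq_sym neq_lift.
  apply: Hsup; rewrite /= /bump /=.
  by have := ltn_ord i; rewrite ltnNge => /negbTE ->.
rewrite prodr_const card_ord /= addn0 -exprD -signr_odd addnn odd_double expr0.
by [].
Qed.
Section Rec.
Variables (R : comNzRingType) (p : nat) (phi : nat -> int -> R) (t : int).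

Definition Q m : 'M[R]_(p.-1.+1) := \prod_(k < m) Gamma p phi (t - k%:Z).

Lemma QS m : Q m.+1 = Q m *m Gamma p phi (t - m%:Z).
Proof. by rewrite /Q big_ord_recr /= mulmxE. Qed.

Lemma Q0 : Q 0 ord0 ord0 = 1.
Proof. by rewrite /Q big_ord0 mxE. Qed.

Lemma coefp0 l u : (p < l)%N -> Defs.coefp p phi l u = 0.
Proof. by move=> h; rewrite /Defs.coefp ifF //; apply/negbTE; lia. Qed.

Lemma Qrec m (c : 'I_p.-1.+1) : Q m.+1 ord0 c =
  \sum_(l < m.+1) Defs.coefp p phi (l + 1 + c) (t - m%:Z + l%:Z) * Q (m - l) ord0 ord0.
Proof.
elim: m c => [|m IH] c.
  rewrite QS big_ord1 subn0 Q0 mulr1 /Q big_ord0 mulmxE mul1r mxE eqxx /=.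
  by rewrite ?add0n ?add1n ?addr0.
rewrite (QS m.+1) mxE big_ord_recl big_ord_recl [X in _ = X + _]mulrC.
rewrite [Gamma _ _ _ ord0 c]mxE eqxx /= subn0 add0n add1n addr0.
congr (_ + _).
have [cl|cg] := ltnP c p.-1.
  pose c' : 'I_p.-1 := Ordinal cl.
  rewrite (bigD1 c') //= big1 ?addr0; last first.
    move=> k kc; rewrite mxE /= ifF ?mulr0 //; apply/negbTE.
    by apply: contra kc => /eqP [e]; apply/eqP/val_inj.
  rewrite mxE /= eqxx mulr1.
  have -> : lift ord0 c' = Ordinal (cl : (c.+1 < p.-1.+1)%N) by apply: val_inj.
  rewrite IH; apply: eq_bigr => l _.
  rewrite /bump /= ?add0n ?add1n subSS.
  congr (Defs.coefp _ _ _ _ * _).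
    by lia.
  by lia.
rewrite big1; last first.
  move=> k _; rewrite mxE /= ifF ?mulr0 //; apply/negbTE.
  by have := ltn_ord k; rewrite eqSS; apply: contraL => /eqP ->; rewrite -leqNgt.
rewrite big1 // => l _; rewrite coefp0 ?mul0r //.
rewrite /bump /=; move: cg; have : (p <= p.-1.+1)%N by case: (p).
lia.
Qed.

End Rec.


Lemma natr0 : (0%R : nat) = 0%N. Proof. by []. Qed.

Lemma HQ (R : comNzRingType) p phi (t : int) (k : nat) :
  Hgreen p phi t (t - k%:Z) = Q R p phi t k ord0 ord0.
Proof.
rewrite /Hgreen ifT; last by lia.
have -> : absz (t - (t - k%:Z))%R = k by lia.
by [].
Qed.

Theorem proposition5 (R : comNzRingType) (p : nat) (hp : (1 <= p)%N)
    (phi : nat -> int -> R) (v : int -> R) (t s : int) (hts : s < t) :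
  \sum_(1 <= j < `|t - s|%N.+1) Hgreen p phi t (s + j%:Z) * v (s + j%:Z)
  = \det (Mrepl p phi v t s).
Proof.
set N := `|t - s|%N.
have tE : t = s + N%:Z by rewrite /N; lia.
have N0 : (0 < N)%N by rewrite /N; lia.
pose j0 : 'I_N := Ordinal N0.
rewrite (@key R N (Mrepl p phi v t s) (fun i => Q R p phi t (N - i.+1) ord0 ord0) j0) //.
- rewrite big_add1 /= big_mkord; apply: eq_bigr => i _.
  have e : s + (i.+1)%:Z = t - (N - i.+1)%:Z by have := ltn_ord i; lia.
  by rewrite {1}e HQ mxE /=.
- have -> : (N - N.-1.+1 = 0)%N by lia.
  exact: Q0.
- move=> j jpos.
  have [m Hm] : exists m, N = (j + m.+1)%N by exists (N - j.+1)%N; have := ltn_ord j; lia.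
  pose G (i : nat) := Q R p phi t (N - i.+1) ord0 ord0 *
    (if (j == i.+1 :> nat) then -1
     else if (j <= i)%N then Defs.coefp p phi (i - j).+1 (s + (i.+1)%:Z) else 0).
  rewrite (eq_bigr (fun i : 'I_N => G i)); last first.
    move=> i _; rewrite !mxE ?natr0 -/N ifF //; apply/negbTE/eqP; lia.
  rewrite -(big_mkord xpredT G).
  rewrite (big_cat_nat _ (n := j.-1)) //=; last by lia.
  rewrite big_nat_cond big1 ?add0r; last first.
    move=> i /andP[/andP[_ hi] _]; rewrite /G ifF; last by apply/negbTE/eqP; lia.
    by rewrite ifF ?mulr0 //; apply/negbTE; rewrite -ltnNge; lia.
  rewrite big_ltn; last by lia.
  have -> : j.-1.+1 = j by lia.
  rewrite {1}/G ifT; last by apply/eqP; lia.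
  have E := big_addn 0 N j xpredT G; rewrite /= in E; rewrite E; clear E.
  have -> : (N - j = m.+1)%N by lia.
  have -> : (N - j.-1.+1 = m.+1)%N by lia.
  rewrite big_mkord mulrN1 Qrec -sumrN -big_split /= big1 // => l _.
  rewrite /G ifF; last by apply/negbTE/eqP; lia.
  rewrite ifT; last by lia.
  have -> : (N - (l + j).+1 = m - l)%N by have := ltn_ord l; lia.
  rewrite addnK addn0 addn1.
  have -> : s + (l + j).+1%:Z = t - m%:Z + l%:Z by lia.
  by rewrite mulrC addNr.
- move=> i j ij; rewrite !mxE ?natr0 -/N ifF; last by apply/negbTE/eqP; lia.
  rewrite ifF; last by apply/negbTE/eqP; lia.
  by rewrite ifF //; apply/negbTE; rewrite -ltnNge; lia.
- move=> i j ij; rewrite !mxE ?natr0 -/N ifF; last by apply/negbTE/eqP; lia.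
  by rewrite ifT //; apply/eqP; lia.
Qed.
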